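(* Let $\mathcal{A}$ be a triangular algebra over a field $F$ with $\operatorname{char}(F)\neq2$. Then $\operatorname{QJDer}(\mathcal{A})=\operatorname{Cent}(\mathcal{A})+\operatorname{Der}(\mathcal{A})$.
   Context: A triangular algebra is an algebra of the form $\mathcal{A}=\begin{pmatrix}B & M\\ 0 & C\end{pmatrix}$ (formal matrix operations), where $B,C$ are unital algebras and $M$ is a $(B,C)$-bimodule that is faithful as a left $B$-module and as a right $C$-module. $x\circ y=xy+yx$. $\operatorname{QJDer}(\mathcal{A})$: linear $f:\mathcal{A}\to\mathcal{A}$ for which there is a linear $h$ with $f(x)\circ y+x\circ f(y)=h(x\circ y)$ for all $x,y$. $\operatorname{Cent}(\mathcal{A})$: linear $f$ with $f(xy)=f(x)y=xf(y)$. $\operatorname{Der}(\mathcal{A})$: linear $d$ with $d(xy)=d(x)y+xd(y)$. Sums of sets of maps are sets of pointwise sums. *)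

(* Defs.v *)
From HB Require Import structures.
From mathcomp Require Import all_boot all_order all_algebra.
Set Implicit Arguments. Unset Strict Implicit. Unset Printing Implicit Defensive.
Import Order.TTheory GRing.Theory Num.Theory.
Local Open Scope ring_scope.

Section Triangular.
Variables (F : fieldType) (B C : algType F) (M : lmodType F).
Variables (lact : B -> M -> M) (ract : M -> C -> M).

Definition is_bimodule : Prop :=
  (forall b m1 m2, lact b (m1 + m2) = lact b m1 + lact b m2) /\
      (forall b1 b2 m, lact (b1 + b2) m = lact b1 m + lact b2 m) /\
      (forall (a : F) b m, lact (a *: b) m = a *: lact b m /\ lact b (a *: m) = a *: lact b m) /\
      (forall b1 b2 m, lact (b1 * b2) m = lact b1 (lact b2 m)) /\
      (forall m, lact 1 m = m) /\
      (forall c m1 m2, ract (m1 + m2) c = ract m1 c + ract m2 c) /\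
      (forall c1 c2 m, ract m (c1 + c2) = ract m c1 + ract m c2) /\
      (forall (a : F) c m, ract m (a *: c) = a *: ract m c /\ ract (a *: m) c = a *: ract m c) /\
      (forall c1 c2 m, ract m (c1 * c2) = ract (ract m c1) c2) /\
      (forall m, ract m 1 = m) /\
      (forall b c m, ract (lact b m) c = lact b (ract m c)).

Definition faithful_left : Prop := forall b : B, (forall m : M, lact b m = 0) -> b = 0.
Definition faithful_right : Prop := forall c : C, (forall m : M, ract m c = 0) -> c = 0.

(* The triangular algebra [[B, M], [0, C]]: elements (b, m, c); its F-module
   structure is the product one; multiplication is formal matrix product. *)
Definition tri := (B * M * C)%type.

Definition tmul (x y : tri) : tri :=
  let: (b, m, c) := x in let: (b', m', c') := y in
  (b * b', lact b m' + ract m c', c * c').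

Definition tjordan (x y : tri) : tri := tmul x y + tmul y x.

Definition is_linear (f : tri -> tri) : Prop :=
  forall (a : F) (x y : tri), f (a *: x + y) = a *: f x + f y.

Definition is_QJDer (f : tri -> tri) : Prop :=
  is_linear f /\ exists h : tri -> tri, is_linear h /\
    forall x y, tjordan (f x) y + tjordan x (f y) = h (tjordan x y).

Definition is_Cent (f : tri -> tri) : Prop :=
  is_linear f /\ forall x y, f (tmul x y) = tmul (f x) y /\ f (tmul x y) = tmul x (f y).

Definition is_Der (d : tri -> tri) : Prop :=
  is_linear d /\ forall x y, d (tmul x y) = tmul (d x) y + tmul x (d y).
End Triangular.

(* Main.v *)
Require Import Defs.
From HB Require Import structures.
From mathcomp Require Import all_boot all_order all_algebra ssrAC.
Import GRing.Theory.
Local Open Scope ring_scope.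

Section Aux.
Variables (F : fieldType) (B C : algType F) (M : lmodType F).
Variables (lact : B -> M -> M) (ract : M -> C -> M).
Hypothesis H2 : (2%:R : F) != 0.
Hypothesis Hb : is_bimodule lact ract.
Hypothesis FL : faithful_left lact.
Hypothesis FR : faithful_right ract.

Local Notation tri := (tri B C M).
Local Notation tmul := (tmul lact ract).
Local Notation tjordan := (tjordan lact ract).

Lemma triD (x y : tri) : x + y = ((x.1.1 + y.1.1, x.1.2 + y.1.2), x.2 + y.2).
Proof. by case: x => [[? ?] ?]; case: y => [[? ?] ?]. Qed.
Lemma triZ a (x : tri) : a *: x = ((a *: x.1.1, a *: x.1.2), a *: x.2).
Proof. by case: x => [[? ?] ?]. Qed.
Lemma tri0 : (0 : tri) = ((0,0),0).
Proof. by []. Qed.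
Lemma triN (x : tri) : - x = ((- x.1.1, - x.1.2), - x.2).
Proof. by case: x => [[? ?] ?]. Qed.

Lemma lactDr b m1 m2 : lact b (m1 + m2) = lact b m1 + lact b m2.
Proof. by case: Hb. Qed.
Lemma lactDl b1 b2 m : lact (b1 + b2) m = lact b1 m + lact b2 m.
Proof. by case: Hb => _ []. Qed.
Lemma lactZl a b m : lact (a *: b) m = a *: lact b m.
Proof. by case: Hb => _ [] _ [] /(_ a b m) []. Qed.
Lemma lactZr a b m : lact b (a *: m) = a *: lact b m.
Proof. by case: Hb => _ [] _ [] /(_ a b m) []. Qed.
Lemma lactM b1 b2 m : lact (b1 * b2) m = lact b1 (lact b2 m).
Proof. by case: Hb => _ [] _ [] _ []. Qed.
Lemma lact1 m : lact 1 m = m.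
Proof. by case: Hb => _ [] _ [] _ [] _ []. Qed.
Lemma ractDl c m1 m2 : ract (m1 + m2) c = ract m1 c + ract m2 c.
Proof. by case: Hb => _ [] _ [] _ [] _ [] _ []. Qed.
Lemma ractDr c1 c2 m : ract m (c1 + c2) = ract m c1 + ract m c2.
Proof. by case: Hb => _ [] _ [] _ [] _ [] _ [] _ []. Qed.
Lemma ractZr a c m : ract m (a *: c) = a *: ract m c.
Proof. by case: Hb => _ [] _ [] _ [] _ [] _ [] _ [] _ [] /(_ a c m) []. Qed.
Lemma ractZl a c m : ract (a *: m) c = a *: ract m c.
Proof. by case: Hb => _ [] _ [] _ [] _ [] _ [] _ [] _ [] /(_ a c m) []. Qed.
Lemma ractM c1 c2 m : ract m (c1 * c2) = ract (ract m c1) c2.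
Proof. by case: Hb => _ [] _ [] _ [] _ [] _ [] _ [] _ [] _ []. Qed.
Lemma ract1 m : ract m 1 = m.
Proof. by case: Hb => _ [] _ [] _ [] _ [] _ [] _ [] _ [] _ [] _ []. Qed.
Lemma lractA b c m : ract (lact b m) c = lact b (ract m c).
Proof. by case: Hb => _ [] _ [] _ [] _ [] _ [] _ [] _ [] _ [] _ [] _. Qed.

Lemma lact0r b : lact b 0 = 0.
Proof. by apply: (@addrI _ (lact b 0)); rewrite -lactDr !addr0. Qed.
Lemma lact0l m : lact 0 m = 0.
Proof. by apply: (@addrI _ (lact 0 m)); rewrite -lactDl !addr0. Qed.
Lemma ract0l c : ract 0 c = 0.
Proof. by apply: (@addrI _ (ract 0 c)); rewrite -ractDl !addr0. Qed.
Lemma ract0r m : ract m 0 = 0.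
Proof. by apply: (@addrI _ (ract m 0)); rewrite -ractDr !addr0. Qed.
Lemma lactNr b m : lact b (- m) = - lact b m.
Proof. by apply/eqP; rewrite -addr_eq0 -lactDr addNr lact0r. Qed.
Lemma lactNl b m : lact (- b) m = - lact b m.
Proof. by apply/eqP; rewrite -addr_eq0 -lactDl addNr lact0l. Qed.
Lemma ractNl c m : ract (- m) c = - ract m c.
Proof. by apply/eqP; rewrite -addr_eq0 -ractDl addNr ract0l. Qed.
Lemma ractNr c m : ract m (- c) = - ract m c.
Proof. by apply/eqP; rewrite -addr_eq0 -ractDr addNr ract0r. Qed.
Lemma lactBl b1 b2 m : lact (b1 - b2) m = lact b1 m - lact b2 m.
Proof. by rewrite lactDl lactNl. Qed.
Lemma lactBr b m1 m2 : lact b (m1 - m2) = lact b m1 - lact b m2.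
Proof. by rewrite lactDr lactNr. Qed.
Lemma ractBl c m1 m2 : ract (m1 - m2) c = ract m1 c - ract m2 c.
Proof. by rewrite ractDl ractNl. Qed.
Lemma ractBr c1 c2 m : ract m (c1 - c2) = ract m c1 - ract m c2.
Proof. by rewrite ractDr ractNr. Qed.

Lemma half (V : lmodType F) (x y : V) : x + x = y + y -> x = y.
Proof.
move=> E; have: (2%:R : F) *: x = 2%:R *: y by rewrite !scaler_nat !mulr2n.
by move/(congr1 (fun v => (2%:R : F)^-1 *: v)); rewrite !scalerA mulVf // !scale1r.
Qed.

Lemma lin_add (f : tri -> tri) : is_linear f -> forall x y, f (x + y) = f x + f y.
Proof. by move=> Hf x y; rewrite -[x in f (x + _)]scale1r Hf scale1r. Qed.
Arguments lin_add {f}.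
Lemma lin0 (f : tri -> tri) : is_linear f -> f 0 = 0.
Proof. by move=> Hf; apply: (@addrI _ (f 0)); rewrite -lin_add // !addr0. Qed.
Arguments lin0 {f}.
Lemma linN (f : tri -> tri) : is_linear f -> forall x, f (- x) = - f x.
Proof. by move=> Hf x; apply/eqP; rewrite -addr_eq0 -lin_add // addNr lin0. Qed.
Arguments linN {f}.
Lemma linD (f g : tri -> tri) : is_linear f -> is_linear g -> is_linear (fun x => f x + g x).
Proof. by move=> Hf Hg a x y; rewrite Hf Hg scalerDr addrACA. Qed.
Lemma linB (f g : tri -> tri) : is_linear f -> is_linear g -> is_linear (fun x => f x - g x).
Proof. by move=> Hf Hg a x y; rewrite Hf Hg scalerBr addrACA opprD. Qed.


Lemma tmulDl (x1 x2 y : tri) : tmul (x1 + x2) y = tmul x1 y + tmul x2 y.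
Proof.
case: x1 => [[b1 m1] c1]; case: x2 => [[b2 m2] c2]; case: y => [[b m] c].
rewrite !triD /= /tmul /= ?triD /= mulrDl mulrDl lactDl ractDl addrACA //.
Qed.
Lemma tmulDr (x y1 y2 : tri) : tmul x (y1 + y2) = tmul x y1 + tmul x y2.
Proof.
case: y1 => [[b1 m1] c1]; case: y2 => [[b2 m2] c2]; case: x => [[b m] c].
rewrite !triD /= /tmul /= ?triD /= mulrDr mulrDr lactDr ractDr addrACA //.
Qed.
Lemma tmulZl a (x y : tri) : tmul (a *: x) y = a *: tmul x y.
Proof.
case: x => [[b1 m1] c1]; case: y => [[b m] c].
by rewrite !triZ /= /tmul /= ?triZ /= -!scalerAl lactZl ractZl scalerDr.
Qed.
Lemma tmulZr a (x y : tri) : tmul x (a *: y) = a *: tmul x y.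
Proof.
case: x => [[b1 m1] c1]; case: y => [[b m] c].
by rewrite !triZ /= /tmul /= ?triZ /= -!scalerAr lactZr ractZr scalerDr.
Qed.
Lemma tmulA (x y w : tri) : tmul (tmul x y) w = tmul x (tmul y w).
Proof.
case: x => [[b1 m1] c1]; case: y => [[b2 m2] c2]; case: w => [[b3 m3] c3].
rewrite /tmul /= !mulrA lactM ractM lactDr ractDl lractA addrA //.
Qed.
Lemma tjordanC (x y : tri) : tjordan x y = tjordan y x.
Proof. by rewrite /tjordan addrC. Qed.
Lemma tjordanDl (x1 x2 y : tri) : tjordan (x1 + x2) y = tjordan x1 y + tjordan x2 y.
Proof. by rewrite /tjordan tmulDl tmulDr addrACA. Qed.
Lemma tjordanDr (x y1 y2 : tri) : tjordan x (y1 + y2) = tjordan x y1 + tjordan x y2.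
Proof. by rewrite !(tjordanC x) tjordanDl. Qed.

Lemma cent_jl g : is_Cent lact ract g -> forall x y, tjordan (g x) y = g (tjordan x y).
Proof.
case=> Hl Hg x y; rewrite /tjordan (lin_add Hl).
by case: (Hg x y) => -> _; case: (Hg y x) => _ ->.
Qed.
Lemma cent_jr g : is_Cent lact ract g -> forall x y, tjordan x (g y) = g (tjordan x y).
Proof. by move=> Hg x y; rewrite tjordanC cent_jl // tjordanC. Qed.
Lemma der_j d : is_Der lact ract d ->
  forall x y, tjordan (d x) y + tjordan x (d y) = d (tjordan x y).
Proof.
case=> Hl Hd x y; rewrite /tjordan (lin_add Hl) !Hd.
by rewrite addrACA (addrC (tmul y (d x))).
Qed.

Lemma backward (f g d : tri -> tri) :
  is_Cent lact ract g -> is_Der lact ract d -> (forall x, f x = g x + d x) ->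
  is_QJDer lact ract f.
Proof.
move=> Hg Hd Hf.
have Lg := Hg.1; have Ld := Hd.1.
split.
  by move=> a x y; rewrite !Hf; apply: linD.
exists (fun x => g x + g x + d x); split.
  by apply: linD => //; apply: linD.
move=> x y; rewrite !Hf tjordanDl tjordanDr cent_jl // cent_jr //.
by rewrite addrACA der_j.
Qed.

Lemma tjE b m c b' m' c' :
  tjordan ((b, m), c) ((b', m'), c') =
  ((b * b' + b' * b, lact b m' + ract m c' + (lact b' m + ract m' c)), c * c' + c' * c).
Proof. by rewrite /tjordan /tmul triD. Qed.

Ltac simp := rewrite ?(mulr1, mul1r, mulr0, mul0r, lact0r, lact0l, ract0l, ract0r,
  lact1, ract1, addr0, add0r, oppr0, subr0, sub0r) /=.

Lemma addI0 (V : zmodType) (x y : V) : x = x + y -> y = 0.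
Proof. by move=> E; apply: (@addrI _ x); rewrite addr0 -E. Qed.
Lemma half0 (V : lmodType F) (r : V) : 0 = r + r -> r = 0.
Proof. by move=> E; apply: half; rewrite addr0 -E. Qed.

Lemma addI0' (V : zmodType) (x y : V) : x + y = x -> y = 0.
Proof. by move=> E; apply: (@addI0 _ x); rewrite E. Qed.
Lemma half0' (V : lmodType F) (r : V) : r + r = 0 -> r = 0.
Proof. by move=> E; apply: half0. Qed.

Lemma FLe (x y : B) : (forall m, lact x m = lact y m) -> x = y.
Proof.
move=> E; apply/eqP; rewrite -subr_eq0; apply/eqP; apply: FL => m.
by rewrite lactBl E subrr.
Qed.
Lemma FRe (x y : C) : (forall m, ract m x = ract m y) -> x = y.
Proof.
move=> E; apply/eqP; rewrite -subr_eq0; apply/eqP; apply: FR => m.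
by rewrite ractBr E subrr.
Qed.
Lemma tmulE b m c b' m' c' :
  tmul ((b, m), c) ((b', m'), c') = ((b * b', lact b m' + ract m c'), c * c').
Proof. by []. Qed.
Lemma ab2 (V : zmodType) (a z p q : V) : (a + z - p) + (p + z - q) - z = a + z - q.
Proof. by rewrite [LHS]+%R.[AC ((3*3)*1) (((3*4)*(5*7))*((1*2)*6))] addNr subrr !add0r. Qed.
Lemma ab3 (V : zmodType) (a w q d z : V) : (a + w - q) + (d + z - a) - w = d + z - q.
Proof. by rewrite [LHS]+%R.[AC ((3*3)*1) (((1*6)*(2*7))*((4*5)*3))] !subrr !add0r. Qed.
Lemma ab1 (V : zmodType) (a p z d : V) : a + p = d + z -> (a - z) + (p - z) = d - z.
Proof. by move=> E; rewrite addrACA E addrA addrK. Qed.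
Arguments ab1 {V a p z d}.


Lemma triE (a a' : B) (b b' : M) (c c' : C) :
  a = a' -> b = b' -> c = c' -> ((a, b), c) = ((a', b'), c') :> tri.
Proof. by move=> -> -> ->. Qed.

Lemma forward f : is_QJDer lact ract f ->
  exists g d : tri -> tri,
      [/\ is_Cent lact ract g, is_Der lact ract d & forall x, f x = g x + d x].
Proof.
case=> Lf [h [Lh H]].
pose one : tri := ((1,0),1).
have tj1 : forall v, tjordan v one = v + v.
  by case=> [[b m] c]; rewrite tjE triD /=; simp.
have Hh : forall x, h x + h x = f x + f x + tjordan x (f one).
  by move=> x; move: (H x one); rewrite !tj1 (lin_add Lh) => <-.
case Ez: (f one) => [[z1 z2] z3].
pose e : tri := ((1,0),0).
case Ee: (f e) => [[p q] r].
have tee : tjordan e e = e + e by rewrite tjE triD /=; simp.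
have := H e e; rewrite tee (lin_add Lh) Hh Ez Ee !tjE !triD /=; simp.
case=> /addrI /half Ep /addI0 Ez2 /half0 Er; subst p z2 r.
have S2 : forall m, (f ((0,m),0)).1.1 = 0 /\ (f ((0,m),0)).2 = 0 /\ lact z1 m = ract m z3.
  move=> m; case Em: (f ((0,m),0)) => [[a bb] g0] /=.
  have tem : tjordan e ((0,m),0) = ((0,m),0) by rewrite tjE; simp.
  have := H e ((0,m),0); rewrite tem.
  move/(congr1 (fun v => v + v)); rewrite Hh Ee Em Ez !tjE !triD /=; simp.
  case=> /addI0' /half0' -> + /half0 ->; rewrite addrACA addrC => /addrI /addIr.
  done.
have zmc m : lact z1 m = ract m z3 by case: (S2 m) => _ [].
have Zb b : b * z1 = z1 * b.
  apply/eqP; rewrite -subr_eq0; apply/eqP; apply: FL => m.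
  by rewrite lactBl !lactM !zmc lractA subrr.
have Zc c : c * z3 = z3 * c.
  apply/eqP; rewrite -subr_eq0; apply/eqP; apply: FR => m.
  by rewrite ractBr !ractM -!zmc lractA subrr.
have S3 b : (f ((b,0),0)).1.2 = lact b q /\ (f ((b,0),0)).2 = 0.
  case Eb: (f ((b,0),0)) => [[a bb] g0] /=.
  have teb : tjordan e ((b,0),0) = ((b,0),0) + ((b,0),0) by rewrite tjE triD; simp.
  have := H e ((b,0),0); rewrite teb (lin_add Lh) Hh Ee Eb Ez !tjE !triD /=; simp.
  by case=> _ /addIr -> /half0 ->.
have S4 c : (f ((0,0),c)).1.1 = 0 /\ (f ((0,0),c)).1.2 = - ract q c.
  case Ec: (f ((0,0),c)) => [[a bb] g0] /=.
  have tec : tjordan e ((0,0),c) = 0 by rewrite tjE; simp.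
  have := H e ((0,0),c); rewrite tec (lin0 Lh) Ee Ec !tjE !triD /=; simp.
  by case=> /half0' -> /eqP; rewrite addrC addr_eq0 => /eqP.
pose al b := (f ((b,0),0)).1.1.
pose de m := (f ((0,m),0)).1.2.
pose ga c := (f ((0,0),c)).2.
have fB b : f ((b,0),0) = ((al b, lact b q), 0).
  by rewrite /al; case: (S3 b); case: (f ((b,0),0)) => [[a bb] g0] /= -> ->.
have fM m : f ((0,m),0) = ((0, de m), 0).
  by rewrite /de; case: (S2 m) => + [+ _]; case: (f ((0,m),0)) => [[a bb] g0] /= -> ->.
have fC c : f ((0,0),c) = ((0, - ract q c), ga c).
  by rewrite /ga; case: (S4 c); case: (f ((0,0),c)) => [[a bb] g0] /= -> ->.
have S5 b m : lact (al b) m + lact b (de m) = de (lact b m) + lact z1 (lact b m).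
  have tbm : tjordan ((b,0),0) ((0,m),0) = ((0, lact b m), 0) by rewrite tjE; simp.
  have := H ((b,0),0) ((0,m),0); rewrite tbm.
  move/(congr1 (fun v => v + v)); rewrite Hh !fB !fM Ez !tjE !triD /=; simp.
  by case=> E; apply: half; rewrite E -zmc addrACA.
have S6 m c : ract (de m) c + ract m (ga c) = de (ract m c) + ract (ract m c) z3.
  have tmc : tjordan ((0,m),0) ((0,0),c) = ((0, ract m c), 0) by rewrite tjE; simp.
  have := H ((0,m),0) ((0,0),c); rewrite tmc.
  move/(congr1 (fun v => v + v)); rewrite Hh !fC !fM Ez !tjE !triD /=; simp.
  by case=> E; apply: half; rewrite E zmc addrACA.
have lz b X : lact b (lact z1 X) = lact z1 (lact b X) by rewrite -!lactM Zb.
have rz m c : ract (ract m c) z3 = ract (ract m z3) c by rewrite -!ractM Zc.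
have S5' b m : lact (al b) m = de (lact b m) + lact z1 (lact b m) - lact b (de m).
  by rewrite -S5 addrK.
have S6' m c : ract m (ga c) = de (ract m c) + ract (ract m c) z3 - ract (de m) c.
  by rewrite -S6 addrC addKr.
have alM b b' : al (b * b') = al b * b' + b * al b' - z1 * (b * b').
  apply: FLe => m0; rewrite lactBl lactDl !lactM !S5' !lactM ?lactDr ?lactNr ?lz.
  by rewrite ab2.
have gaM c c' : ga (c * c') = ga c * c' + c * ga c' - z3 * (c * c').
  apply: FRe => m0; rewrite ractBr ractDr !ractM !S6' !ractM ?ractDl ?ractNl ?rz.
  by rewrite ab3.
pose zz : tri := ((z1,0),z3).
have Zx x : tmul zz x = tmul x zz.
  by case: x => [[b m] c]; rewrite !tmulE; simp; rewrite Zb zmc Zc.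
pose g x := tmul zz x.
pose d x := f x - g x.
have Lg : is_linear g by move=> a x y; rewrite /g tmulDr tmulZr.
have Ld : is_linear d := @linB f g Lf Lg.
have d0 : d ((0,0),0) = 0 := lin0 Ld.
have dB b : d ((b,0),0) = ((al b - z1 * b, lact b q), 0).
  by rewrite /d /g fB tmulE triN triD /=; simp.
have dM m : d ((0,m),0) = ((0, de m - lact z1 m), 0).
  by rewrite /d /g fM tmulE triN triD /=; simp.
have dC c : d ((0,0),c) = ((0, - ract q c), ga c - z3 * c).
  by rewrite /d /g fC tmulE triN triD /=; simp.
exists g, d; split.
- split=> // x y; rewrite /g; split; first by rewrite tmulA.
  by rewrite -tmulA Zx tmulA.
- split=> //; clearbody d.
  have PDl x1 x2 y : d (tmul x1 y) = tmul (d x1) y + tmul x1 (d y) ->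
      d (tmul x2 y) = tmul (d x2) y + tmul x2 (d y) ->
      d (tmul (x1 + x2) y) = tmul (d (x1 + x2)) y + tmul (x1 + x2) (d y).
    move=> E1 E2; rewrite tmulDl (lin_add Ld) E1 E2 (lin_add Ld) tmulDl tmulDl.
    by rewrite addrACA.
  have PDr x y1 y2 : d (tmul x y1) = tmul (d x) y1 + tmul x (d y1) ->
      d (tmul x y2) = tmul (d x) y2 + tmul x (d y2) ->
      d (tmul x (y1 + y2)) = tmul (d x) (y1 + y2) + tmul x (d (y1 + y2)).
    move=> E1 E2; rewrite tmulDr (lin_add Ld) E1 E2 (lin_add Ld) tmulDr tmulDr.
    by rewrite addrACA.
  have dec b m c : ((b,m),c) = ((b,0),0) + ((0,m),0) + ((0,0),c) :> tri.
    by rewrite !triD /=; simp.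
  case=> [[b m] c] [[b' m'] c']; rewrite (dec b m c) (dec b' m' c').
  apply: (PDl); [apply: (PDl)|]; (apply: (PDr); [apply: (PDr)|]);
    rewrite tmulE; simp; rewrite ?d0 ?dB ?dM ?dC !tmulE triD /=; simp.
  + apply: triE => //; last by rewrite lactM.
    rewrite mulrBl mulrBr alM (mulrA b z1) (Zb b) -!mulrA.
    by rewrite addrACA addrA.
  + by rewrite lactBl lactBr lactM lz (ab1 (S5 b m')).
  + by rewrite lactNr lractA subrr.
  + by [].
  + by [].
  + have S6z m0 c0 : ract (de m0) c0 + ract m0 (ga c0) = de (ract m0 c0) + lact z1 (ract m0 c0).
      by rewrite S6 zmc.
    by rewrite ractBl ractBr lractA -(Zc c') ractM -zmc (ab1 (S6z m c')).
  + by [].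
  + by [].
  + apply: triE => //; first by rewrite ractNl ractM.
    rewrite mulrBl mulrBr gaM (mulrA c z3) (Zc c) -!mulrA.
    by rewrite addrACA addrA.
- by move=> x; rewrite /d addrC subrK.
Qed.
End Aux.

Theorem corollary4p5 (F : fieldType) (B C : algType F) (M : lmodType F)
    (lact : B -> M -> M) (ract : M -> C -> M) :
  (2%:R : F) != 0 ->
  is_bimodule lact ract -> faithful_left lact -> faithful_right ract ->
  forall f : tri B C M -> tri B C M,
    is_QJDer lact ract f <->
    exists g d : tri B C M -> tri B C M,
      [/\ is_Cent lact ract g, is_Der lact ract d & forall x, f x = g x + d x].
Proof.
move=> H2 Hb FL FR f; split; first exact: forward.
by case=> g [d [Hg Hd Hf]]; apply: backward Hg Hd Hf.
Qed.
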